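(* Let $\mathcal{S}=(T,T^+)$ be a concrete regularity structure, let $M=(\Pi,g)$ be a model over $\mathcal{S}$, let $\gamma\in\mathbb{R}$, and let $\mathbf{v}\in\mathcal{D}^\gamma(\mathcal{S},g)$. Set $\Lambda_x=\Pi_x(\mathbf{v}(x))$ for $x\in\mathbb{R}^d$. Then the family $(\Lambda_x)_{x\in\mathbb{R}^d}$ satisfies the $\gamma$-coherence estimate: there exists $C<\infty$ such that for all $x,y\in\mathbb{R}^d$ and all $0<t\le1$, $$\big|\langle\Lambda_y-\Lambda_x,p_t(x,\cdot)\rangle\big|\le C\sum_{\tau\in\mathbf{B},\,|\tau|<\gamma}t^{|\tau|/2}\big(|y-x|+t^{1/2}\big)^{\gamma-|\tau|}.$$
   Context: $p_t(x,y)$ is the heat kernel on $\mathbb{R}^d$ and $\langle\cdot,\cdot\rangle$ the distribution/test-function pairing. A concrete regularity structure $\mathcal{S}=(T,T^+)$ consists of graded vector spaces $T=\bigoplus_{a\in A}T_a$ and $T^+=\bigoplus_{\alpha\in A^+}T^+_\alpha$ with each $T_a$, $T^+_\alpha$ finite dimensional, where $A\subset\mathbb{R}$ is locally finite and bounded below and $A^+\subset[0,\infty)$ contains $0$; $T^+$ is a Hopf algebra with coproduct $\Delta^+:T^+\to T^+\otimes T^+$, unit $\mathbf{1}_+$ and counit $\mathbf{1}'_+$; and there is a linear map $\Delta:T\to T\otimes T^+$ with $(\Delta\otimes\mathrm{Id})\Delta=(\mathrm{Id}\otimes\Delta^+)\Delta$, $(\mathrm{Id}\otimes\mathbf{1}'_+)\Delta=\mathrm{Id}$,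 and $\Delta T_a\subset\bigoplus_{\alpha\in A^+}T_{a-\alpha}\otimes T^+_\alpha$ for all $a\in A$. Fix a basis $\mathbf{B}_a$ of each $T_a$ and let $\mathbf{B}=\bigcup_a\mathbf{B}_a$; for $\tau\in\mathbf{B}_a$ write $|\tau|=a$; for $h\in T$ write $h_\tau$ for its coefficient on $\tau\in\mathbf{B}$; let $\mathbf{B}^+$ be a similarly graded basis of $T^+$. $G^+$ is the set of real-valued linear multiplicative maps on $T^+$. A model $M=(\Pi,g)$ is a family of linear maps $\Pi_x:T\to\mathcal{S}'(\mathbb{R}^d)$ ($x\in\mathbb{R}^d$) and characters $g_{yx}\in G^+$ ($x,y\in\mathbb{R}^d$) such that $(g_{zy}\otimes g_{yx})\Delta^+=g_{zx}$ and, with $\Gamma_{yx}=(\mathrm{Id}\otimes g_{yx})\Delta:T\to T$, one has $\Pi_x(\tau)=\Pi_y(\Gamma_{yx}\tau)$ for all $x,y,z$ and $\tau\in T$; and for each $c\in\mathbb{R}$, $\sup_{\mu\in\mathbf{B}^+,|\mu|\le c}\sup_{x,y}|g_{yx}(\mu)|/|y-x|^{|\mu|}<\infty$ and $\sup_{\tau\in\mathbf{B},|\tau|\le c}\sup_{0<t\le1}\sup_x t^{-|\tau|/2}|\langle\Pi_x(\tau),p_t(x,\cdot)\rangle|<\infty$. With $T_{<\gamma}=\bigoplus_{a<\gamma}T_a$, $\mathcal{D}^\gamma(\mathcal{S},g)$ is the space of functions $\mathbf{v}:\mathbb{R}^d\to T_{<\gamma}$ with $\max_{\tau\in\mathbf{B},|\tau|<\gamma}\sup_{x\neq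 y}\big(|\mathbf{v}(x)_\tau|+|(\mathbf{v}(y)-\Gamma_{yx}\mathbf{v}(x))_\tau|/|y-x|^{\gamma-|\tau|}\big)<\infty$. A family $(\Lambda_x)$ of distributions satisfies the $\gamma$-coherence estimate if there are finitely many exponents $\beta_i\le\gamma$ and $C$ with $|\langle\Lambda_y-\Lambda_x,p_t(x,\cdot)\rangle|\le C\sum_it^{\beta_i/2}(|y-x|+t^{1/2})^{\gamma-\beta_i}$ for all $x,y$ and $0<t\le1$. *)

(* Defs.v *)
From HB Require Import structures.
From mathcomp Require Import all_boot all_order all_algebra.
From mathcomp Require Import all_classical all_reals all_analysis.
Set Implicit Arguments. Unset Strict Implicit. Unset Printing Implicit Defensive.
Import Order.TTheory GRing.Theory Num.Theory.
Local Open Scope classical_set_scope.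
Local Open Scope ring_scope.

Section Defs.
Variables (R : realType) (d : nat).

Definition enorm (x : 'rV[R]_d) : R := Num.sqrt (\sum_(i < d) x ord0 i ^+ 2).

Definition heat (t : R) (x y : 'rV[R]_d) : R :=
  (4 * pi * t) `^ (- (d%:R / 2)) * expR (- (enorm (x - y) ^+ 2) / (4 * t)).

(* Distributions are represented by their action on test functions;
   <Lambda, phi> := Lambda phi. *)
Definition Dist := ('rV[R]_d -> R) -> R.

Definition pair_heat (L : Dist) (t : R) (x : 'rV[R]_d) : R := L (heat t x).

Definition dirac_coef (I : eqType) (i j : I) : R := (i == j)%:R.

(* A concrete regularity structure, described in bases.                      *)
(*  I : index set of the graded basis B of T, deg i = |i|.                   *)
(*  J : index set of the graded basis B^+ of T^+, degp j = |j|.              *)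
(*  Elements of T (resp. T^+) are finitely supported coefficient functions.  *)
(*  mulc a b k  : coefficient of b_k in b_a * b_b  (product of T^+)          *)
(*  unitp k     : coefficient of b_k in 1_+                                  *)
(*  counit k    : 1'_+ (b_k)                                                 *)
(*  cop k i j   : coefficient of b_i (x) b_j in Delta^+ b_k                  *)
(*  antip k j   : coefficient of b_j in S(b_k) (antipode)                    *)
(*  copT t s m  : coefficient of b_s (x) b_m in Delta b_t                    *)
Definition is_concrete_reg_structure (I J : choiceType)
  (deg : I -> R) (degp : J -> R)
  (mulc : J -> J -> J -> R) (unitp : J -> R) (counit : J -> R)
  (cop : J -> J -> J -> R) (antip : J -> J -> R)
  (copT : I -> I -> J -> R) : Prop :=
  (* T = (+)_{a in A} T_a, A locally finite bounded below, T_a finite dim *)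
  (forall c : R, finite_set [set i : I | deg i <= c]) /\
  (* T^+ graded by A^+ in [0,oo), each T^+_alpha finite dimensional *)
  (forall j : J, 0 <= degp j) /\
  (forall al : R, finite_set [set j : J | degp j = al]) /\
  (forall a b : J, finite_set [set k : J | mulc a b k != 0]) /\
  finite_set [set k : J | unitp k != 0] /\
  (forall a b c k : J,
     \sum_(m \in [set: J]) mulc a b m * mulc m c k
     = \sum_(m \in [set: J]) mulc b c m * mulc a m k) /\
  (forall b k : J, \sum_(m \in [set: J]) unitp m * mulc m b k = dirac_coef b k) /\
  (forall b k : J, \sum_(m \in [set: J]) unitp m * mulc b m k = dirac_coef b k) /\
  (forall k : J, finite_set [set p : J * J | cop k p.1 p.2 != 0]) /\
  (forall k j1 j2 j3 : J,
     \sum_(m \in [set: J]) cop k m j3 * cop m j1 j2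
     = \sum_(m \in [set: J]) cop k j1 m * cop m j2 j3) /\
  (forall k j : J, \sum_(m \in [set: J]) cop k m j * counit m = dirac_coef j k) /\
  (forall k j : J, \sum_(m \in [set: J]) cop k j m * counit m = dirac_coef j k) /\
  (forall a b j1 j2 : J,
     \sum_(k \in [set: J]) mulc a b k * cop k j1 j2
     = \sum_(p \in [set: J * J]) \sum_(q \in [set: J * J])
         cop a p.1 p.2 * cop b q.1 q.2 * mulc p.1 q.1 j1 * mulc p.2 q.2 j2) /\
  (forall j1 j2 : J,
     \sum_(k \in [set: J]) unitp k * cop k j1 j2 = unitp j1 * unitp j2) /\
  (forall a b : J,
     \sum_(k \in [set: J]) mulc a b k * counit k = counit a * counit b) /\
  (\sum_(k \in [set: J]) unitp k * counit k = 1) /\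
  (forall k : J, finite_set [set j : J | antip k j != 0]) /\
  (forall k j : J,
     \sum_(p \in [set: J * J])
        (cop k p.1 p.2 * \sum_(m \in [set: J]) antip p.1 m * mulc m p.2 j)
     = counit k * unitp j) /\
  (forall k j : J,
     \sum_(p \in [set: J * J])
        (cop k p.1 p.2 * \sum_(m \in [set: J]) antip p.2 m * mulc p.1 m j)
     = counit k * unitp j) /\
  (forall t : I, finite_set [set p : I * J | copT t p.1 p.2 != 0]) /\
  (forall (t s : I) (m : J), copT t s m != 0 -> deg s = deg t - degp m) /\
  (forall (t s : I) (m1 m2 : J),
     \sum_(r \in [set: I]) copT t r m2 * copT r s m1
     = \sum_(n \in [set: J]) copT t s n * cop n m1 m2) /\
  (forall t s : I, \sum_(m \in [set: J]) copT t s m * counit m = dirac_coef s t).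

(* g : J -> R is (the values on the basis of) a character in G^+ *)
Definition is_character (J : choiceType) (mulc : J -> J -> J -> R)
  (unitp : J -> R) (g : J -> R) : Prop :=
  (forall a b : J, \sum_(k \in [set: J]) mulc a b k * g k = g a * g b) /\
  \sum_(k \in [set: J]) unitp k * g k = 1.

(* Gamma_{yx} = (Id (x) g_{yx}) Delta, acting on coefficient functions *)
Definition Gam (I J : choiceType) (copT : I -> I -> J -> R) (gyx : J -> R)
  (h : I -> R) (s : I) : R :=
  \sum_(p \in [set: I * J]) h p.1 * copT p.1 s p.2 * gyx p.2.

Definition PiT (I : choiceType) (Pib : I -> Dist) (h : I -> R) : Dist :=
  fun phi => \sum_(i \in [set: I]) h i * Pib i phi.

(* M = (Pi, g) is a model; Pib x i = Pi_x(b_i), g y x = g_{yx} *)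
Definition is_model (I J : choiceType)
  (deg : I -> R) (degp : J -> R) (mulc : J -> J -> J -> R) (unitp : J -> R)
  (cop : J -> J -> J -> R) (copT : I -> I -> J -> R)
  (Pib : 'rV[R]_d -> I -> Dist) (g : 'rV[R]_d -> 'rV[R]_d -> J -> R) : Prop :=
  (forall x y : 'rV[R]_d, is_character mulc unitp (g y x)) /\
  (forall (x y z : 'rV[R]_d) (k : J),
     \sum_(p \in [set: J * J]) cop k p.1 p.2 * g z y p.1 * g y x p.2 = g z x k) /\
  (forall (x y : 'rV[R]_d) (t : I),
     Pib x t = PiT (Pib y) (Gam copT (g y x) (dirac_coef t))) /\
  (forall c : R, exists K : R, forall (m : J) (x y : 'rV[R]_d),
     degp m <= c -> `|g y x m| <= K * enorm (y - x) `^ degp m) /\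
  (forall c : R, exists K : R, forall (t : I) (s : R) (x : 'rV[R]_d),
     deg t <= c -> 0 < s <= 1 ->
     `|pair_heat (Pib x t) s x| <= K * s `^ (deg t / 2)).

Definition in_Dgamma (I J : choiceType) (deg : I -> R)
  (copT : I -> I -> J -> R) (g : 'rV[R]_d -> 'rV[R]_d -> J -> R)
  (gamma : R) (v : 'rV[R]_d -> I -> R) : Prop :=
  (forall (x : 'rV[R]_d) (t : I), v x t != 0 -> deg t < gamma) /\
  exists K : R, forall t : I, deg t < gamma ->
    (forall x : 'rV[R]_d, `|v x t| <= K) /\
    (forall x y : 'rV[R]_d, x != y ->
       `|v y t - Gam copT (g y x) (v x) t| <= K * enorm (y - x) `^ (gamma - deg t)).

End Defs.

(* Main.v *)
Require Import Defs.
From HB Require Import structures.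
From mathcomp Require Import all_boot all_order all_algebra.
From mathcomp Require Import all_classical all_reals all_analysis.
From mathcomp Require Import finmap.
Import Order.TTheory GRing.Theory Num.Theory.
Local Open Scope classical_set_scope.
Local Open Scope ring_scope.

Lemma fsum_nz (R : realType) (T : choiceType) (P : set T) (F : T -> R) :
  \sum_(p \in P) F p != 0 -> exists p, F p != 0.
Proof.
move=> H; case: (pselect (exists p, F p != 0)) => // Hn; exfalso.
move/negP: H; apply; apply/eqP; apply: fsbig1 => p _.
case: (eqVneq (F p) 0) => // Hp; exfalso; apply: Hn; by exists p.
Qed.

Lemma enormN (R : realType) (d : nat) (z : 'rV[R]_d) : enorm (- z) = enorm z.
Proof. rewrite /enorm; congr Num.sqrt; apply: eq_bigr => i _; by rewrite mxE sqrrN. Qed.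

Theorem proposition7 (R : realType) (d : nat) (I J : choiceType)
  (deg : I -> R) (degp : J -> R)
  (mulc : J -> J -> J -> R) (unitp : J -> R) (counit : J -> R)
  (cop : J -> J -> J -> R) (antip : J -> J -> R) (copT : I -> I -> J -> R)
  (HS : is_concrete_reg_structure deg degp mulc unitp counit cop antip copT)
  (Pib : 'rV[R]_d -> I -> Dist R d) (g : 'rV[R]_d -> 'rV[R]_d -> J -> R)
  (HM : is_model deg degp mulc unitp cop copT Pib g)
  (gamma : R) (v : 'rV[R]_d -> I -> R)
  (Hv : in_Dgamma deg copT g gamma v) :
  let Lambda := fun x : 'rV[R]_d => PiT (Pib x) (v x) in
  exists C : R, forall (x y : 'rV[R]_d) (t : R), 0 < t <= 1 ->
    `|pair_heat (Lambda y) t x - pair_heat (Lambda x) t x|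
      <= C * \sum_(s \in [set s : I | deg s < gamma])
               t `^ (deg s / 2) * (enorm (y - x) + Num.sqrt t) `^ (gamma - deg s).
Proof.
move=> Lambda.
case: HS => Hdeg [Hdegp [_ [_ [_ [_ [_ [_ [_ [_ [_ [_ [_ [_ [_ [_ [_ [_ [_ [HcT [HcTdeg _]]]]]]]]]]]]]]]]]]]].
case: HM => _ [_ [Hpi [_ Hbnd]]].
case: Hv => Hsupp [K HK].
have [K2 HK2] := Hbnd gamma.
set D := [set s : I | deg s < gamma].
have Dfin : finite_set D.
  by apply: sub_finite_set (Hdeg gamma) => s /=; exact: ltW.
set A := fset_set D.
have memA : forall s, (s \in A) = (deg s < gamma).
  by move=> s; rewrite in_fset_set // mem_setE.
have cfin : forall i s, finite_set [set m : J | copT i s m != 0].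
  move=> i s; apply: sub_finite_set (finite_image snd (HcT i)).
  by move=> m /= Hm; exists (s, m).
have Psfin : forall s, finite_set (D `*`` (fun i => [set m : J | copT i s m != 0])).
  by move=> s; apply: finite_setXR.
set Ps := fun s => fset_set (D `*`` (fun i => [set m : J | copT i s m != 0])).
have memPs : forall s p, (p \in Ps s) = (deg p.1 < gamma) && (copT p.1 s p.2 != 0).
  move=> s p; rewrite /Ps in_fset_set //.
  apply/idP/andP => [/set_mem [H1 H2] | [H1 H2]]; first by split.
  by apply/mem_set; split.
have Ly : forall x y t, pair_heat (Lambda y) t x
    = \sum_(i <- A) v y i * Pib y i (heat t x).
  move=> x y t; rewrite /pair_heat /Lambda /PiT; apply: fsbigTE => i.
  rewrite memA => Hi.
  case: (eqVneq (v y i) 0) => [->|/Hsupp H]; first by rewrite mul0r.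
  by rewrite H in Hi.
have Gd0 : forall x y i s, deg i < gamma ->
    Gam copT (g x y) (dirac_coef R i) s != 0 -> deg s < gamma.
  move=> x y i s Hi /fsum_nz [[p1 m]] /=.
  rewrite /dirac_coef; case: (eqVneq i p1) => [<-|_]; last by rewrite !mul0r eqxx.
  case: (eqVneq (copT i s m) 0) => [->|/HcTdeg ->]; first by rewrite mulr0 mul0r eqxx.
  move=> _; apply: le_lt_trans Hi; rewrite lerBlDr lerDl; exact: Hdegp.
have Pexp : forall x y i, deg i < gamma -> forall phi, Pib y i phi
    = \sum_(s <- A) Gam copT (g x y) (dirac_coef R i) s * Pib x s phi.
  move=> x y i Hi phi; rewrite (Hpi y x i) /PiT; apply: fsbigTE => s.
  rewrite memA => Hs.
  case: (eqVneq (Gam copT (g x y) (dirac_coef R i) s) 0) => [->|/Gd0 H]; first by rewrite mul0r.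
  by rewrite (H Hi) in Hs.
have Gdf : forall x y i s, deg i < gamma ->
    Gam copT (g x y) (dirac_coef R i) s
    = \sum_(p <- Ps s) (i == p.1)%:R * copT p.1 s p.2 * g x y p.2.
  move=> x y i s Hi; rewrite /Gam /dirac_coef; apply: fsbigTE => -[p1 m].
  rewrite memPs /= negb_and -leNgt negbK => /orP[Hp|/eqP->]; last by rewrite mulr0 mul0r.
  case: (eqVneq i p1) => [Hip|_]; last by rewrite !mul0r.
  by rewrite -Hip leNgt Hi in Hp.
have Gvf : forall x y s,
    Gam copT (g x y) (v y) s
    = \sum_(p <- Ps s) v y p.1 * copT p.1 s p.2 * g x y p.2.
  move=> x y s; rewrite /Gam; apply: fsbigTE => -[p1 m].
  rewrite memPs /= negb_and -leNgt negbK => /orP[Hp|/eqP->]; last by rewrite mulr0 mul0r.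
  case: (eqVneq (v y p1) 0) => [->|/Hsupp H]; first by rewrite !mul0r.
  by rewrite leNgt H in Hp.
have comb : forall x y s, \sum_(i <- A) v y i * Gam copT (g x y) (dirac_coef R i) s
    = Gam copT (g x y) (v y) s.
  move=> x y s; rewrite Gvf.
  transitivity (\sum_(i <- A) v y i *
     \sum_(p <- Ps s) ((i == p.1)%:R * copT p.1 s p.2 * g x y p.2)).
    by apply: eq_big_seq => i; rewrite memA => Hi; rewrite (Gdf x y i s Hi).
  under eq_bigr do rewrite big_distrr.
  rewrite exchange_big /=; apply: eq_big_seq => p; rewrite memPs => /andP[Hp _].
  rewrite (bigD1_seq p.1) ?memA ?fset_uniq //= eqxx mul1r big1 ?addr0; first by rewrite mulrA.
  by move=> i /negbTE ->; rewrite !mul0r mulr0.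
exists (`|K| * `|K2|) => x y t Ht.
have Hge : forall y, 0 <= `|K| * `|K2| * \sum_(s \in [set s : I | deg s < gamma])
               t `^ (deg s / 2) * (enorm (y - x) + Num.sqrt t) `^ (gamma - deg s).
  move=> y'; apply: mulr_ge0; first by apply: mulr_ge0.
  by apply: fsumr_ge0 => s _; apply: mulr_ge0; apply: powR_ge0.
case: (eqVneq x y) => [<-|Hxy]; first by rewrite subrr normr0; apply: Hge.
rewrite (Ly x y t) (Ly x x t).
have E1 : \sum_(i <- A) v y i * Pib y i (heat t x)
    = \sum_(s <- A) Gam copT (g x y) (v y) s * Pib x s (heat t x).
  transitivity (\sum_(i <- A) v y i *
     \sum_(s <- A) Gam copT (g x y) (dirac_coef R i) s * Pib x s (heat t x)).
    by apply: eq_big_seq => i; rewrite memA => Hi; rewrite (Pexp x y i Hi).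
  under eq_bigr do rewrite big_distrr.
  rewrite exchange_big /=; apply: eq_bigr => s _.
  rewrite -(comb x y s) big_distrl /=; apply: eq_bigr => i _; by rewrite mulrA.
rewrite E1 -sumrB.
under eq_bigr do rewrite -mulrBl.
rewrite (fsbig_finite _ _ Dfin) -/A big_distrr /=.
apply: le_trans (ler_norm_sum _ _ _) _.
rewrite big_seq [X in _ <= X]big_seq; apply: ler_sum => s; rewrite memA => Hs.
rewrite normrM distrC.
have [_ H1] := HK s Hs.
have H1' := H1 y x ltac:(by rewrite eq_sym).
have H2 := HK2 s t x (ltW Hs) Ht; rewrite /pair_heat in H2.
set e1 := enorm (x - y) `^ (gamma - deg s) in H1'.
set e2 := t `^ (deg s / 2) in H2 *.
set e3 := (enorm (y - x) + Num.sqrt t) `^ (gamma - deg s).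
have e1e3 : e1 <= e3.
  rewrite /e1 /e3; apply: ge0_ler_powR.
  - by rewrite subr_ge0 ltW.
  - by rewrite nnegrE /enorm sqrtr_ge0.
  - by rewrite nnegrE addr_ge0 // /enorm sqrtr_ge0.
  - by rewrite -opprB enormN lerDl sqrtr_ge0.
apply: le_trans (ler_pM (normr_ge0 _) (normr_ge0 _) H1' H2) _.
apply: le_trans (ler_norm _) _.
rewrite normrM !normrM (ger0_norm (powR_ge0 _ _)) (ger0_norm (powR_ge0 _ _)).
have -> : `|K| * `|K2| * (e2 * e3) = (`|K| * e3) * (`|K2| * e2).
  by rewrite [e2 * e3]mulrC mulrACA.
apply: ler_pM; first by apply: mulr_ge0 => //; apply: powR_ge0.
- by apply: mulr_ge0 => //; apply: powR_ge0.
- by apply: ler_wpM2l.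
- by [].
Qed.
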